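(* Let $(U,V)$ be a jointly symmetric random vector with uniform margins and distribution function (copula) $C$, i.e. $(U,V)\stackrel{d}{=}(1-U,V)\stackrel{d}{=}(U,1-V)$. Let $T_\vee(u)=|2u-1|$ and let $C^*$ be the distribution function of $(T_\vee(U),T_\vee(V))$. Then for all $u,v\in[0,1]$, $$C(u,v)=\frac{2u+2v-1+(-1)^{\mathbf{1}\{(u-0.5)(v-0.5)<0\}}\,C^*\big(T_\vee(u),T_\vee(v)\big)}{4}.$$
   Context: $\mathbf{1}\{\cdot\}$ denotes the indicator function. *)

(* Defs.v *)
From HB Require Import structures.
From mathcomp Require Import all_boot all_order all_algebra.
From mathcomp Require Import all_classical all_reals all_analysis.
Set Implicit Arguments. Unset Strict Implicit. Unset Printing Implicit Defensive.
Import Order.TTheory GRing.Theory Num.Theory.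
Local Open Scope classical_set_scope.
Local Open Scope ring_scope.

Definition Tvee {R : realType} (u : R) : R := `|2 * u - 1|.

Definition jdf {R : realType} {d : measure_display} {T : measurableType d}
  (P : probability T R) (X Y : T -> R) (x y : R) : R :=
  fine (P [set w | X w <= x /\ Y w <= y]).

Definition uniform01 {R : realType} {d : measure_display} {T : measurableType d}
  (P : probability T R) (X : T -> R) : Prop :=
  forall x : R, 0 <= x <= 1 -> P [set w | X w <= x] = x%:E.

Definition same_law2 {R : realType} {d : measure_display} {T : measurableType d}
  (P : probability T R) (X1 Y1 X2 Y2 : T -> R) : Prop :=
  forall A : set (R * R), measurable A ->
    P ((fun w => (X1 w, Y1 w)) @^-1` A) = P ((fun w => (X2 w, Y2 w)) @^-1` A).

(* Main.v *)
Require Import Defs.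
From HB Require Import structures.
From mathcomp Require Import all_boot all_order all_algebra.
From mathcomp Require Import all_classical all_reals all_analysis.
From mathcomp Require Import lra.
Set Implicit Arguments. Unset Strict Implicit.
Import Order.TTheory GRing.Theory Num.Theory.
Local Open Scope classical_set_scope.
Local Open Scope ring_scope.

Definition ev {R : realType} {d : measure_display} {T : measurableType d}
  (X Y : T -> R) (A B : set R) : set T := [set w | A (X w) /\ B (Y w)].
Definition Q {R : realType} {d : measure_display} {T : measurableType d}
  (P : probability T R) (X Y : T -> R) (A B : set R) : R := fine (P (ev X Y A B)).

Lemma ev_meas (R : realType) (d : measure_display) (T : measurableType d)
  (X Y : T -> R) (mX : measurable_fun setT X) (mY : measurable_fun setT Y)
  (A B : set R) : measurable A -> measurable B -> measurable (ev X Y A B).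
Proof.
move=> mA mB.
have -> : ev X Y A B = (setT `&` X @^-1` A) `&` (setT `&` Y @^-1` B).
  by apply/seteqP; split => w /=; rewrite /ev /=; [case=> a b|case=> [[_ a] [_ b]]].
exact: measurableI (mX _ _ _) (mY _ _ _).
Qed.

Lemma QU1 (R : realType) (d : measure_display) (T : measurableType d)
  (P : probability T R) (X Y : T -> R) (mX : measurable_fun setT X) (mY : measurable_fun setT Y)
  (A1 A2 B : set R) : measurable A1 -> measurable A2 -> measurable B ->
  A1 `&` A2 = set0 -> Q P X Y (A1 `|` A2) B = Q P X Y A1 B + Q P X Y A2 B.
Proof.
move=> m1 m2 mB dis.
rewrite /Q.
have -> : ev X Y (A1 `|` A2) B = ev X Y A1 B `|` ev X Y A2 B.
  by apply/seteqP; split => w /=; rewrite /ev /=; [case=> [[a|a] b]; [left|right]|case=> [[a b]|[a b]]; split => //; [left|right]].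
rewrite measureU; first by rewrite fineD // fin_num_measure //; exact: ev_meas.
- exact: ev_meas.
- exact: ev_meas.
apply/seteqP; split => // w [[a1 b1] [a2 b2]].
by have : (A1 `&` A2) (X w) by []; rewrite dis.
Qed.

Lemma Qswap (R : realType) (d : measure_display) (T : measurableType d)
  (P : probability T R) (X Y : T -> R) A B : Q P X Y A B = Q P Y X B A.
Proof.
rewrite /Q /ev; congr (fine (P _)).
by apply/seteqP; split => w /= [].
Qed.

Lemma Q_ge0 (R : realType) (d : measure_display) (T : measurableType d)
  (P : probability T R) (X Y : T -> R) A B : 0 <= Q P X Y A B.
Proof. by rewrite /Q fine_ge0. Qed.

Lemma Q_le (R : realType) (d : measure_display) (T : measurableType d)
  (P : probability T R) (X Y : T -> R) (mX : measurable_fun setT X) (mY : measurable_fun setT Y)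
  A B A' B' : measurable A -> measurable B -> measurable A' -> measurable B' ->
  A `<=` A' -> B `<=` B' -> Q P X Y A B <= Q P X Y A' B'.
Proof.
move=> mA mB mA' mB' sA sB.
rewrite /Q fine_le // ?fin_num_measure //; try exact: ev_meas.
apply: le_measure; rewrite ?inE; try exact: ev_meas.
by move=> w [a b]; split; [apply: sA|apply: sB].
Qed.
Lemma Q_marg (R : realType) (d : measure_display) (T : measurableType d)
  (P : probability T R) (X Y : T -> R) (uX : uniform01 P X) x :
  0 <= x <= 1 -> Q P X Y `]-oo, x]%classic setT = x.
Proof.
move=> hx; rewrite /Q /ev.
have -> : [set w | `]-oo, x]%classic (X w) /\ [set: R] (Y w)] = [set w | X w <= x].
  by apply/seteqP; split => w /=; rewrite in_itv /=; [case|].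
by rewrite uX.
Qed.

Lemma Q_sym1 (R : realType) (d : measure_display) (T : measurableType d)
  (P : probability T R) (X Y : T -> R) (s : same_law2 P X Y (fun w => 1 - X w) Y) A B :
  measurable A -> measurable B ->
  Q P X Y A B = Q P X Y ((fun x => 1 - x) @^-1` A) B.
Proof.
move=> mA mB; rewrite /Q /ev; congr fine; exact: (s (A `*` B) (measurableX mA mB)).
Qed.

Lemma Q_sym2 (R : realType) (d : measure_display) (T : measurableType d)
  (P : probability T R) (X Y : T -> R) (s : same_law2 P X Y X (fun w => 1 - Y w)) A B :
  measurable A -> measurable B ->
  Q P X Y A B = Q P X Y A ((fun x => 1 - x) @^-1` B).
Proof.
move=> mA mB; rewrite /Q /ev; congr fine; exact: (s (A `*` B) (measurableX mA mB)).
Qed.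

Lemma Q_atom (R : realType) (d : measure_display) (T : measurableType d)
  (P : probability T R) (X Y : T -> R) (mX : measurable_fun setT X) (mY : measurable_fun setT Y)
  (uX : uniform01 P X) a B : 0 <= a <= 1 -> measurable B ->
  Q P X Y [set a] B = 0.
Proof.
move=> /andP[a0 a1] mB.
have mL : forall x : R, measurable (`]-oo, x]%classic) by move=> x; exact: measurable_itv.
have le1 : Q P X Y [set a] B <= Q P X Y [set a] setT.
  by apply: Q_le => //; exact: measurable_set1.
suff : Q P X Y [set a] setT = 0 by move=> h; apply/eqP; rewrite eq_le Q_ge0 andbT -h.
have key : forall e, 0 < e <= a -> Q P X Y [set a] setT <= e.
  move=> e /andP[e0 ea].
  have -> : e = Q P X Y `]a - e, a]%classic setT.
    have : Q P X Y `]-oo, a]%classic setT =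
       Q P X Y `]-oo, a - e]%classic setT + Q P X Y `]a - e, a]%classic setT.
      rewrite -QU1 //; try exact: measurable_itv.
        congr Q; apply/seteqP; split => z /=; rewrite !in_itv /=.
          by move=> za; case: (leP z (a - e)) => h; [left|right; apply/andP; split].
        by case=> [h|/andP[_ h]] //; apply: le_trans h _; lra.
      apply/seteqP; split => z //=; rewrite !in_itv /= => -[h /andP[h' _]]; lra.
    rewrite !Q_marg //; try (apply/andP; split; lra).
    by move=> h; lra.
  apply: Q_le => //; try exact: measurable_set1; try exact: measurable_itv.
  by move=> z /= ->; rewrite in_itv /=; apply/andP; split; lra.
have [a00|apos] := eqVneq a 0.
  apply/eqP; rewrite eq_le Q_ge0 andbT.
  have : Q P X Y [set a] setT <= Q P X Y `]-oo, a]%classic setT.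
    apply: Q_le => //; try exact: measurable_set1.
    by move=> z /= ->; rewrite in_itv /=.
  by rewrite Q_marg ?a00 // lexx ler01.
apply/eqP; rewrite eq_le Q_ge0 andbT; apply/negP => /negP; rewrite -ltNge => p0.
set p := Q P X Y [set a] setT in key p0.
have apos' : 0 < a by rewrite lt_neqAle eq_sym apos a0.
have h1 : 0 < Num.min (p / 2) a <= a.
  by rewrite lt_min ge_min lexx orbT andbT divr_gt0.
have := key _ h1; rewrite le_min => /andP[h _]; lra.
Qed.


Lemma Q_Lt (R : realType) (d : measure_display) (T : measurableType d)
  (P : probability T R) (X Y : T -> R) (mX : measurable_fun setT X) (mY : measurable_fun setT Y)
  (uX : uniform01 P X) a B : 0 <= a <= 1 -> measurable B ->
  Q P X Y `]-oo, a[%classic B = Q P X Y `]-oo, a]%classic B.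
Proof.
move=> ha mB.
rewrite [RHS](_ : _ = Q P X Y (`]-oo, a[%classic `|` [set a]) B); last first.
  congr Q; apply/seteqP; split => z /=; rewrite !in_itv /=.
    by move=> h; case: (ltP z a) => h'; [left|right; apply/eqP; rewrite eq_le h h'].
  by case=> [/ltW|->].
rewrite QU1 ?Q_atom ?addr0 //; try exact: measurable_itv; try exact: measurable_set1.
by apply/seteqP; split => z //= -[h e]; move: h; rewrite e in_itv /= ltxx.
Qed.

Lemma Q_Icc1 (R : realType) (d : measure_display) (T : measurableType d)
  (P : probability T R) (X Y : T -> R) (mX : measurable_fun setT X) (mY : measurable_fun setT Y)
  (uX : uniform01 P X) a b B : 0 <= a <= 1 -> a <= b -> measurable B ->
  Q P X Y `[a, b]%classic B = Q P X Y `]-oo, b]%classic B - Q P X Y `]-oo, a]%classic B.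
Proof.
move=> ha hab mB.
rewrite -(Q_Lt mX mY uX ha mB).
rewrite [Q P X Y `]-oo, b]%classic B](_ : _ = Q P X Y (`]-oo, a[%classic `|` `[a, b]%classic) B); last first.
  congr Q; apply/seteqP; split => z /=; rewrite !in_itv /=.
    by move=> zb; case: (ltP z a) => h; [left|right; apply/andP; split].
  by case=> [h|/andP[_ h]] //; apply: le_trans hab; apply: ltW.
rewrite QU1 //; try exact: measurable_itv; first by lra.
by apply/seteqP; split => z //=; rewrite !in_itv /= => -[h /andP[h' _]]; lra.
Qed.

Lemma Q_Icc2 (R : realType) (d : measure_display) (T : measurableType d)
  (P : probability T R) (X Y : T -> R) (mX : measurable_fun setT X) (mY : measurable_fun setT Y)
  (uY : uniform01 P Y) a b A : 0 <= a <= 1 -> a <= b -> measurable A ->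
  Q P X Y A `[a, b]%classic = Q P X Y A `]-oo, b]%classic - Q P X Y A `]-oo, a]%classic.
Proof.
by move=> ha hab mA; rewrite !(Qswap _ X Y A) Q_Icc1.
Qed.

Lemma Q_rect (R : realType) (d : measure_display) (T : measurableType d)
  (P : probability T R) (X Y : T -> R) (mX : measurable_fun setT X) (mY : measurable_fun setT Y)
  (uX : uniform01 P X) (uY : uniform01 P Y) a b c e :
  0 <= a <= 1 -> a <= b -> 0 <= c <= 1 -> c <= e ->
  Q P X Y `[a, b]%classic `[c, e]%classic =
  Q P X Y `]-oo, b]%classic `]-oo, e]%classic - Q P X Y `]-oo, a]%classic `]-oo, e]%classic
  - Q P X Y `]-oo, b]%classic `]-oo, c]%classic + Q P X Y `]-oo, a]%classic `]-oo, c]%classic.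
Proof.
move=> ha hab hc hce.
have mi := measurable_itv.
rewrite (Q_Icc1 mX mY uX ha hab (mi _ _)).
rewrite !(Q_Icc2 mX mY uY hc hce (mi _ _)).
lra.
Qed.

Lemma Q_flip (R : realType) (d : measure_display) (T : measurableType d)
  (P : probability T R) (X Y : T -> R) (mX : measurable_fun setT X) (mY : measurable_fun setT Y)
  (uX : uniform01 P X) (uY : uniform01 P Y)
  (s : forall A B, measurable A -> measurable B ->
        Q P X Y A B = Q P X Y ((fun x => 1 - x) @^-1` A) B) x y :
  0 <= x <= 1 -> 0 <= y <= 1 ->
  Q P X Y `]-oo, 1 - x]%classic `]-oo, y]%classic = y - Q P X Y `]-oo, x]%classic `]-oo, y]%classic.
Proof.
move=> hx hy.
have my : measurable (`]-oo, y]%classic : set R) by exact: measurable_itv.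
have mi := measurable_itv.
have e3 : Q P X Y setT `]-oo, y]%classic = y by rewrite Qswap Q_marg.
have e1 : Q P X Y setT `]-oo, y]%classic =
   Q P X Y `]-oo, x]%classic `]-oo, y]%classic + Q P X Y `]x, +oo[%classic `]-oo, y]%classic.
  rewrite -QU1 //; last first.
    by apply/seteqP; split => z //=; rewrite !in_itv /= => -[h h']; lra.
  congr Q; apply/seteqP; split => z //= _; rewrite !in_itv /=.
  by case: (leP z x) => h; [left|right].
have e2 : Q P X Y `]x, +oo[%classic `]-oo, y]%classic = Q P X Y `]-oo, 1 - x]%classic `]-oo, y]%classic.
  rewrite (s _ _ (mi _ _) my).
  have hx' : 0 <= 1 - x <= 1 by apply/andP; split; lra.
  rewrite -(Q_Lt mX mY uX hx' my).
  congr Q; apply/seteqP; split => z /=; rewrite !in_itv /= => h; lra.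
lra.
Qed.

Lemma Tvee_le1 (R : realType) (u z : R) : u <= 2^-1 -> (Tvee z <= Tvee u) = (u <= z <= 1 - u).
Proof.
move=> hu; rewrite /Tvee (ler0_norm (x := 2 * u - 1)); last by lra.
rewrite ler_norml; apply/idP/idP => /andP[h1 h2]; apply/andP; split; lra.
Qed.

Lemma Tvee_le2 (R : realType) (u z : R) : 2^-1 <= u -> (Tvee z <= Tvee u) = (1 - u <= z <= u).
Proof.
move=> hu; rewrite /Tvee (ger0_norm (x := 2 * u - 1)); last by lra.
rewrite ler_norml; apply/idP/idP => /andP[h1 h2]; apply/andP; split; lra.
Qed.

Unset Implicit Arguments.

Theorem propositionC1 (R : realType) (d : measure_display) (T : measurableType d)
  (P : probability T R) (U V : T -> R)
  (mU : measurable_fun setT U) (mV : measurable_fun setT V)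
  (uU : uniform01 P U) (uV : uniform01 P V)
  (symU : same_law2 P U V (fun w => 1 - U w) V)
  (symV : same_law2 P U V U (fun w => 1 - V w)) :
  forall u v : R, 0 <= u <= 1 -> 0 <= v <= 1 ->
    jdf P U V u v =
      (2 * u + 2 * v - 1
       + (-1) ^+ nat_of_bool ((u - 2^-1) * (v - 2^-1) < 0)
         * jdf P (fun w => Tvee (U w)) (fun w => Tvee (V w)) (Tvee u) (Tvee v)) / 4.
Proof.
move=> u v hu hv.
have jC : jdf P U V u v = Q P U V `]-oo, u]%classic `]-oo, v]%classic.
  rewrite /jdf /Q /ev; congr (fine (P _)); apply/seteqP; split => w /=; rewrite !in_itv //=.
have jT : forall a b c e, (forall z, (Tvee z <= Tvee u) = (a <= z <= b)) ->
    (forall z, (Tvee z <= Tvee v) = (c <= z <= e)) ->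
    jdf P (fun w => Tvee (U w)) (fun w => Tvee (V w)) (Tvee u) (Tvee v) =
    Q P U V `[a, b]%classic `[c, e]%classic.
  move=> a b c e ha hc.
  rewrite /jdf /Q /ev; congr (fine (P _)); apply/seteqP; split => w /=; rewrite !in_itv /= ha hc //.
have s1 := Q_sym1 symU.
have s2 : forall A B, measurable A -> measurable B ->
    Q P V U A B = Q P V U ((fun x => 1 - x) @^-1` A) B.
  by move=> A B mA mB; rewrite !(Qswap P V U); exact: Q_sym2.
have A1 := Q_flip mU mV uU uV s1.
have B1 : forall x y, 0 <= x <= 1 -> 0 <= y <= 1 ->
  Q P U V `]-oo, x]%classic `]-oo, 1 - y]%classic = x - Q P U V `]-oo, x]%classic `]-oo, y]%classic.
  by move=> x y hx hy; rewrite !(Qswap P U V); exact: Q_flip.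
have hu' : 0 <= 1 - u <= 1 by apply/andP; lra.
have hv' : 0 <= 1 - v <= 1 by apply/andP; lra.
have a1 := A1 _ _ hu hv. have a2 := A1 _ _ hu hv'. have b1 := B1 _ _ hu hv.
rewrite jC.
case: (leP u 2^-1) => hu2; case: (leP v 2^-1) => hv2.
- rewrite (jT u (1 - u) v (1 - v)); [|move=> z; apply: Tvee_le1; lra|move=> z; apply: Tvee_le1; lra].
  rewrite Q_rect //; try lra.
  case: ltP => hs /=; last by rewrite expr0 mul1r; lra.
  nra.
- rewrite (jT u (1 - u) (1 - v) v); [|move=> z; apply: Tvee_le1; lra|move=> z; apply: Tvee_le2; lra].
  rewrite Q_rect //; try lra.
  case: ltP => hs /=; first by rewrite expr1 mulN1r; lra.
  have e : 1 - u = u.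
    have : 0 < v - 2^-1 by lra.
    by move=> hp; rewrite (pmulr_lge0 _ hp) in hs; lra.
  rewrite e in a1 b1 *; rewrite expr0 mul1r; lra.
- rewrite (jT (1 - u) u v (1 - v)); [|move=> z; apply: Tvee_le2; lra|move=> z; apply: Tvee_le1; lra].
  rewrite Q_rect //; try lra.
  case: ltP => hs /=; first by rewrite expr1 mulN1r; lra.
  have e : 1 - v = v.
    have : 0 < u - 2^-1 by lra.
    by move=> hp; rewrite (pmulr_rge0 _ hp) in hs; lra.
  rewrite e in a1 b1 *; rewrite expr0 mul1r; lra.
- rewrite (jT (1 - u) u (1 - v) v); [|move=> z; apply: Tvee_le2; lra|move=> z; apply: Tvee_le2; lra].
  rewrite Q_rect //; try lra.
  case: ltP => hs /=; last by rewrite expr0 mul1r; lra.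
  nra.
Qed.
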